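(* For every computable metric space $X$: $\overline{\mathsf{C}_X'}\equiv_{sW}(\overline{\mathsf{C}_X})'$.
   Context: A problem $f:\subseteq X\rightrightarrows Y$ between represented spaces (sets with surjective partial maps $\delta:\subseteq\mathbb{N}^\mathbb{N}\to X$) is a partial multi-valued map; $F\vdash f$ means $\delta_YF(p)\in f(\delta_X(p))$ whenever $\delta_X(p)\in\mathrm{dom}(f)$; $f\le_{sW}g$ iff there are computable $H,K$ with $HGK\vdash f$ for all $G\vdash g$; $\equiv_{sW}$ the induced equivalence. For a computable metric space $(X,d,\alpha)$ (Cauchy representation; basic balls $B_{\langle n,\langle i,k\rangle\rangle}=B(\alpha(n),\tfrac{i}{k+1})$), $\mathcal{A}_-(X)$ is the set of closed subsets represented by $p\mapsto X\setminus\bigcup_nB_{p(n)}$, and $\mathsf C_X:\subseteq\mathcal A_-(X)\rightrightarrows X$, $A\mapsto A$, defined on nonempty $A$. $\lim:\subseteq\mathbb{N}^\mathbb{N}\to\mathbb{N}^\mathbb{N}$ maps $\langle p_0,p_1,\dots\rangle$ to $\lim_np_n$; the jump $f'$ of $f$ is $f$ with input representation $\delta_X\circ\lim$. For $p\in\mathbb{N}^\mathbb{N}$, $p-1$ is the concatenation of $p(0)-1,p(1)-1,\dots$ with $0-1$ the empty word; the completion of $(X,\delta_X)$ is $\overline X=X\cup\{\bot\}$ with $\delta_{\overline X}(p)=\delta_X(p-1)$ if $p-1$ is an infinite sequence in $\mathrm{dom}(\delta_X)$ and $\bot$ otherwise; the completion $\overline f:\overline X\rightrightarrows\overline Y$ equals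 $f$ on $\mathrm{dom}(f)$ and $\overline Y$ elsewhere. *)

(* Defs.v *)
From Stdlib Require Import Reals Lia Arith.
Open Scope R_scope.

Definition baire := nat -> nat.

(* Cantor pairing and its inverse (enumeration along diagonals). *)
Definition cpair (a b : nat) : nat := ((a + b) * (a + b + 1) / 2 + b)%nat.

Fixpoint unpair (n : nat) : nat * nat :=
  match n with
  | O => (0%nat, 0%nat)
  | S n' => match unpair n' with
            | (S x, y) => (x, S y)
            | (O, y) => (S y, 0%nat)
            end
  end.

(* Unary partial recursive functions (Kleene basis, arguments coded by cpair),
   extended with an oracle call. *)
Inductive code : Type :=
| CZero | CSucc | CId | CFst | CSnd | COracle
| CPair (f g : code)
| CComp (f g : code)
| CRec (f g : code)           (* h<a,0> = f a ; h<a,n+1> = g <a,<n,h<a,n>>> *)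
| CMu (f : code).

Inductive eval (p : baire) : code -> nat -> nat -> Prop :=
| ev_zero x : eval p CZero x 0
| ev_succ x : eval p CSucc x (S x)
| ev_id x : eval p CId x x
| ev_fst x : eval p CFst x (fst (unpair x))
| ev_snd x : eval p CSnd x (snd (unpair x))
| ev_oracle x : eval p COracle x (p x)
| ev_pair f g x a b : eval p f x a -> eval p g x b -> eval p (CPair f g) x (cpair a b)
| ev_comp f g x y z : eval p g x y -> eval p f y z -> eval p (CComp f g) x z
| ev_rec0 f g x a z : unpair x = (a, 0%nat) -> eval p f a z -> eval p (CRec f g) x z
| ev_recS f g x a n w z : unpair x = (a, S n) ->
    eval p (CRec f g) (cpair a n) w -> eval p g (cpair a (cpair n w)) z ->
    eval p (CRec f g) x z
| ev_mu f x n : eval p f (cpair x n) 0 ->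
    (forall m, (m < n)%nat -> exists v, eval p f (cpair x m) (S v)) ->
    eval p (CMu f) x n.

Definition computed (e : code) (p q : baire) : Prop :=
  forall n, eval p e n (q n).

Record rspace : Type := RSpace {
  carrier : Type;
  rep : baire -> carrier -> Prop   (* graph of the (partial) representation *)
}.

Record problem : Type := Problem {
  pin : rspace;
  pout : rspace;
  prel : carrier pin -> carrier pout -> Prop
}.

Definition pdom (f : problem) (x : carrier (pin f)) : Prop := exists y, prel f x y.

Definition realizes (F : baire -> baire -> Prop) (f : problem) : Prop :=
  forall p x, rep (pin f) p x -> pdom f x ->
    (exists q, F p q) /\
    (forall q, F p q -> exists y, rep (pout f) q y /\ prel f x y).

Definition functional (G : baire -> baire -> Prop) : Prop :=
  forall p q q', G p q -> G p q' -> forall n, q n = q' n.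

Definition sW_le (f g : problem) : Prop :=
  exists eH eK : code,
    forall G : baire -> baire -> Prop, functional G -> realizes G g ->
      realizes (fun p s => exists q r, computed eK p q /\ G q r /\ computed eH r s) f.

Definition sW_equiv (f g : problem) : Prop := sW_le f g /\ sW_le g f.

(* lim <p_0,p_1,...> = lim_n p_n, where <p_0,p_1,...>(<i,j>) = p_i(j) *)
Definition blim (p q : baire) : Prop :=
  forall j, exists N, forall i, (N <= i)%nat -> p (cpair i j) = q j.

Definition jumpS (X : rspace) : rspace :=
  RSpace (carrier X) (fun p x => exists q, blim p q /\ rep X q x).

Definition jumpP (f : problem) : problem :=
  Problem (jumpS (pin f)) (pout f) (prel f).

Fixpoint cnt (p : baire) (n : nat) : nat :=
  match n with
  | O => 0%nat
  | S n' => (cnt p n' + (if Nat.ltb 0 (p n') then 1 else 0))%nat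
  end.

(* q = p - 1 and p - 1 is an infinite sequence *)
Definition minus1 (p q : baire) : Prop :=
  forall k, exists n, (0 < p n)%nat /\ cnt p n = k /\ q k = (p n - 1)%nat.

Definition complS (X : rspace) : rspace :=
  RSpace (option (carrier X))
    (fun p ox => match ox with
                 | Some x => exists q, minus1 p q /\ rep X q x
                 | None => ~ (exists q x, minus1 p q /\ rep X q x)
                 end).

Definition complP (f : problem) : problem :=
  Problem (complS (pin f)) (complS (pout f))
    (fun ox oy => match ox with
                  | Some x => pdom f x -> exists y, oy = Some y /\ prel f x y
                  | None => True
                  end).

Definition decQ (m : nat) : R :=
  let (a, b) := unpair m in
  let (s, num) := unpair a in
  (if Nat.eqb s 0 then 1 else -1) * INR num / INR (S b).

Record cms : Type := CMS {
  mX : Type;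
  md : mX -> mX -> R;
  malpha : nat -> mX;
  md_zero : forall x y, md x y = 0 <-> x = y;
  md_sym : forall x y, md x y = md y x;
  md_tri : forall x y z, md x z <= md x y + md y z;
  malpha_dense : forall x eps, 0 < eps -> exists n, md x (malpha n) < eps;
  md_computable : exists e : code, forall i j k, exists m,
      eval (fun _ => 0%nat) e (cpair i (cpair j k)) m /\
      Rabs (md (malpha i) (malpha j) - decQ m) <= / 2 ^ k
}.

Definition cauchyS (M : cms) : rspace :=
  RSpace (mX M) (fun p x =>
    (forall i j, (i <= j)%nat -> md M (malpha M (p i)) (malpha M (p j)) <= / 2 ^ i) /\
    (forall i, md M (malpha M (p i)) x <= / 2 ^ i)).

Definition ball (M : cms) (c : nat) (y : mX M) : Prop :=
  let (n, r) := unpair c in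
  let (i, k) := unpair r in
  md M (malpha M n) y < INR i / INR (S k).

Definition closedset (M : cms) (A : mX M -> Prop) : Prop :=
  forall x, (forall eps, 0 < eps -> exists y, A y /\ md M x y < eps) -> A x.

Definition AminusS (M : cms) : rspace :=
  RSpace {A : mX M -> Prop | closedset M A}
    (fun p A => forall x, proj1_sig A x <-> ~ (exists n, ball M (p n) x)).

(* C_X : A |-> A, defined on nonempty A (dom = {A | exists x, x in A}) *)
Definition CX (M : cms) : problem :=
  Problem (AminusS M) (cauchyS M) (fun A x => proj1_sig A x).

(* Main.v *)
Require Import Defs.
From Stdlib Require Import Reals Lia Lra Arith Classical ClassicalEpsilon FunctionalExtensionality.
Open Scope bool_scope.
Open Scope nat_scope.

Lemma T_S s : (S s) * (S s + 1) / 2 = s * (s + 1) / 2 + S s.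
Proof.
  replace (S s * (S s + 1)) with (s * (s + 1) + S s * 2) by nia.
  rewrite Nat.div_add; lia.
Qed.

Lemma cpair_Sr x y : cpair x (S y) = S (cpair (S x) y).
Proof. unfold cpair. replace (x + S y) with (S x + y) by lia. lia. Qed.

Lemma cpair_S0 y : cpair (S y) 0 = S (cpair 0 y).
Proof. unfold cpair. rewrite !Nat.add_0_r, Nat.add_0_l. rewrite T_S. lia. Qed.

Lemma cpair_unpair n : cpair (fst (unpair n)) (snd (unpair n)) = n.
Proof.
  induction n as [|n IH]; [reflexivity|].
  simpl. destruct (unpair n) as [[|x] y]; simpl in *.
  - rewrite cpair_S0. congruence.
  - rewrite cpair_Sr. congruence.
Qed.

Lemma unpair_cpair a b : unpair (cpair a b) = (a, b).
Proof.
  remember (cpair a b) as n eqn:E. revert a b E.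
  induction n as [|n IH]; intros a b E.
  - assert (b = 0) by (unfold cpair in E; lia). subst b.
    destruct a as [|a]; [reflexivity|]. rewrite cpair_S0 in E. discriminate.
  - destruct b as [|b].
    + destruct a as [|a]; [discriminate|]. rewrite cpair_S0 in E. injection E as E.
      simpl. rewrite (IH 0 a E). reflexivity.
    + rewrite cpair_Sr in E. injection E as E. simpl. rewrite (IH (S a) b E). reflexivity.
Qed.

Definition u1 n := fst (unpair n).
Definition u2 n := snd (unpair n).
Arguments u1 : simpl never.
Arguments u2 : simpl never.
Arguments cpair : simpl never.
Lemma u1_cpair a b : u1 (cpair a b) = a. Proof. unfold u1; rewrite unpair_cpair; reflexivity. Qed.
Lemma u2_cpair a b : u2 (cpair a b) = b. Proof. unfold u2; rewrite unpair_cpair; reflexivity. Qed.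
Lemma cpair_u n : cpair (u1 n) (u2 n) = n. Proof. apply cpair_unpair. Qed.

Fixpoint mufree (e : code) : Prop :=
  match e with
  | CMu _ => False
  | CPair f g | CComp f g | CRec f g => mufree f /\ mufree g
  | _ => True
  end.

Lemma eval_det p e x y : eval p e x y -> mufree e -> forall y', eval p e x y' -> y = y'.
Proof.
  induction 1; simpl; intros Hm y' H'; inversion H'; subst; try reflexivity.
  - f_equal; [apply IHeval1|apply IHeval2]; tauto.
  - match goal with Hx : eval _ g _ ?yy |- _ => assert (y = yy) by (apply IHeval1; tauto) end.
    subst. apply IHeval2; tauto.
  - match goal with Hx : unpair _ = _ |- _ => rewrite H in Hx; injection Hx as <- end.
    apply IHeval; tauto.
  - match goal with Hx : unpair _ = _ |- _ => rewrite H in Hx; discriminate end.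
  - match goal with Hx : unpair _ = _ |- _ => rewrite H in Hx; discriminate end.
  - match goal with Hx : unpair _ = _ |- _ => rewrite H in Hx; injection Hx as <- <- end.
    match goal with Hx : eval _ (CRec f g) _ ?ww |- _ => assert (w = ww) by (apply IHeval1; simpl; tauto) end.
    subst. apply IHeval2; tauto.
  - contradiction.
Qed.

Definition comp (F : baire -> nat -> nat) : Prop :=
  exists e, mufree e /\ forall p n, eval p e n (F p n).
Definition compb (b : baire -> nat -> bool) : Prop :=
  comp (fun p n => if b p n then 1 else 0).

Lemma comp_ext F G : (forall p n, F p n = G p n) -> comp F -> comp G.
Proof. intros E [e [m H]]. exists e; split; auto. intros; rewrite <- E; auto. Qed.

Lemma comp_id : comp (fun p n => n).
Proof. exists CId; split; [exact I|]. intros; constructor. Qed.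
Lemma comp_zero : comp (fun p n => 0).
Proof. exists CZero; split; [exact I|]. intros; constructor. Qed.
Lemma comp_compose F A : comp F -> comp A -> comp (fun p n => F p (A p n)).
Proof.
  intros [f [mf Hf]] [a [ma Ha]]. exists (CComp f a); split; [simpl; tauto|].
  intros; econstructor; eauto.
Qed.
Lemma comp_S A : comp A -> comp (fun p n => S (A p n)).
Proof.
  intros HA. apply (comp_compose (fun p n => S n)); auto.
  exists CSucc; split; [exact I|]; intros; constructor.
Qed.
Lemma comp_u1 A : comp A -> comp (fun p n => u1 (A p n)).
Proof.
  intros HA. apply (comp_compose (fun p n => u1 n)); auto.
  exists CFst; split; [exact I|]; intros; constructor.
Qed.
Lemma comp_u2 A : comp A -> comp (fun p n => u2 (A p n)).
Proof.
  intros HA. apply (comp_compose (fun p n => u2 n)); auto.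
  exists CSnd; split; [exact I|]; intros; constructor.
Qed.
Lemma comp_orc A : comp A -> comp (fun p n => p (A p n)).
Proof.
  intros HA. apply (comp_compose (fun p n => p n)); auto.
  exists COracle; split; [exact I|]; intros; constructor.
Qed.
Lemma comp_cpair A B : comp A -> comp B -> comp (fun p n => cpair (A p n) (B p n)).
Proof.
  intros [a [ma Ha]] [b [mb Hb]]. exists (CPair a b); split; [simpl; tauto|].
  intros; constructor; auto.
Qed.
Lemma comp_const c : comp (fun p n => c).
Proof. induction c; [apply comp_zero| apply comp_S; auto]. Qed.

Fixpoint iter_rec (F0 : nat -> nat) (St : nat -> nat -> nat -> nat) (a n : nat) : nat :=
  match n with
  | O => F0 a
  | S n' => St a n' (iter_rec F0 St a n')
  end.

Lemma comp_iter F0 St A N : comp F0 ->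
  comp (fun p x => St p (u1 x) (u1 (u2 x)) (u2 (u2 x))) -> comp A -> comp N ->
  comp (fun p z => iter_rec (F0 p) (St p) (A p z) (N p z)).
Proof.
  intros [f [mf Hf]] [g [mg Hg]] HA HN.
  assert (Hr : comp (fun p x => iter_rec (F0 p) (St p) (u1 x) (u2 x))).
  { exists (CRec f g); split; [simpl; tauto|]. intros p x.
    rewrite <- (cpair_u x) at 1. generalize (u1 x) (u2 x). intros a n.
    induction n as [|n IH].
    - apply ev_rec0 with (a := a); [apply unpair_cpair| apply Hf].
    - eapply ev_recS; [apply unpair_cpair| exact IH|].
      pose proof (Hg p (cpair a (cpair n (iter_rec (F0 p) (St p) a n)))) as H.
      rewrite !u1_cpair, !u2_cpair, !u1_cpair in H. simpl. exact H. }
  pose proof (comp_compose _ _ Hr (comp_cpair _ _ HA HN)) as H.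
  eapply comp_ext; [|exact H]. intros; simpl. rewrite u1_cpair, u2_cpair; reflexivity.
Qed.

Lemma comp_if b A B : compb b -> comp A -> comp B ->
  comp (fun p n => if b p n then A p n else B p n).
Proof.
  intros Hb HA HB.
  pose proof (comp_iter (fun p a => u2 a) (fun p a n w => u1 a)
     (fun p z => cpair (A p z) (B p z)) (fun p z => if b p z then 1 else 0)) as H.
  eapply comp_ext; [|apply H].
  - intros p n; cbv beta; destruct (b p n); simpl; rewrite ?u1_cpair, ?u2_cpair; reflexivity.
  - apply comp_u2, comp_id.
  - apply comp_u1, comp_u1, comp_id.
  - apply comp_cpair; auto.
  - exact Hb.
Qed.

Lemma comp_add A B : comp A -> comp B -> comp (fun p n => A p n + B p n).
Proof.
  intros HA HB.
  pose proof (comp_iter (fun p a => a) (fun p a n w => S w) A B) as H.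
  eapply comp_ext; [|apply H; auto].
  - intros p n; cbv beta. simpl. generalize (A p n) (B p n). intros a k. induction k; simpl; lia.
  - apply comp_id.
  - apply comp_S, comp_u2, comp_u2, comp_id.
Qed.

Lemma comp_pred A : comp A -> comp (fun p n => pred (A p n)).
Proof.
  intros HA.
  pose proof (comp_iter (fun p a => 0) (fun p a n w => n) (fun _ _ => 0) A) as H.
  eapply comp_ext; [|apply H; auto].
  - intros p n; cbv beta. generalize (A p n). intros [|k]; reflexivity.
  - apply comp_zero.
  - apply comp_u1, comp_u2, comp_id.
  - apply comp_zero.
Qed.

Lemma comp_sub A B : comp A -> comp B -> comp (fun p n => A p n - B p n).
Proof.
  intros HA HB.
  pose proof (comp_iter (fun p a => a) (fun p a n w => pred w) A B) as H.
  eapply comp_ext; [|apply H; auto].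
  - intros p n; cbv beta. simpl. generalize (A p n) (B p n). intros a k. induction k; simpl; lia.
  - apply comp_id.
  - apply comp_pred, comp_u2, comp_u2, comp_id.
Qed.

Lemma compb_leb A B : comp A -> comp B -> compb (fun p n => A p n <=? B p n).
Proof.
  intros HA HB. unfold compb. eapply comp_ext; [|apply comp_sub; [apply (comp_const 1)| apply (comp_sub A B); auto]].
  intros p n; cbv beta. destruct (Nat.leb_spec (A p n) (B p n)); lia.
Qed.
Lemma compb_ltb A B : comp A -> comp B -> compb (fun p n => A p n <? B p n).
Proof. intros HA HB. apply (compb_leb (fun p n => S (A p n))); auto. apply comp_S; auto. Qed.
Lemma compb_andb a b : compb a -> compb b -> compb (fun p n => a p n && b p n).
Proof.
  intros Ha Hb. unfold compb. eapply comp_ext; [|apply (comp_if a); [exact Ha|exact Hb|apply comp_zero]].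
  intros p n; cbv beta; simpl. destruct (a p n); reflexivity.
Qed.
Lemma compb_negb a : compb a -> compb (fun p n => negb (a p n)).
Proof.
  intros Ha. unfold compb. eapply comp_ext; [|apply comp_sub; [apply (comp_const 1)| exact Ha]].
  intros p n; cbv beta; simpl. destruct (a p n); reflexivity.
Qed.
Lemma compb_orb a b : compb a -> compb b -> compb (fun p n => a p n || b p n).
Proof.
  intros Ha Hb. unfold compb.
  eapply comp_ext; [|apply (compb_negb (fun p n => negb (a p n) && negb (b p n))); apply compb_andb; apply compb_negb; auto].
  intros p n; cbv beta; simpl. destruct (a p n), (b p n); reflexivity.
Qed.
Lemma compb_eqb A B : comp A -> comp B -> compb (fun p n => A p n =? B p n).
Proof.
  intros HA HB. unfold compb.
  eapply comp_ext; [|apply (compb_andb (fun p n => A p n <=? B p n) (fun p n => B p n <=? A p n)); apply compb_leb; auto].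
  intros p n; cbv beta; simpl. destruct (Nat.eqb_spec (A p n) (B p n)), (Nat.leb_spec (A p n) (B p n)), (Nat.leb_spec (B p n) (A p n)); simpl; try reflexivity; lia.
Qed.

Fixpoint fnd (h : baire) (k x : nat) : nat :=
  match x with
  | O => 0
  | S x' => if (0 <? h x') && (cnt h x' =? k) then h x' else fnd h k x'
  end.

Fixpoint allb (f : nat -> bool) (n : nat) : bool :=
  match n with
  | O => true
  | S n' => allb f n' && f n'
  end.

Lemma allb_spec f n : allb f n = true <-> forall i, i < n -> f i = true.
Proof.
  induction n as [|n IH]; simpl.
  - split; intros; [lia|reflexivity].
  - rewrite Bool.andb_true_iff, IH. split.
    + intros [H1 H2] i Hi. destruct (Nat.eq_dec i n); [subst; auto| apply H1; lia].
    + intros H; split; auto.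
Qed.

Lemma comp_fnd (hh : baire -> nat -> nat -> nat) (K X : baire -> nat -> nat) :
  comp (fun p x => hh p (u1 x) (u2 x)) -> comp K -> comp X ->
  comp (fun p z => fnd (hh p z) (K p z) (X p z)).
Proof.
  intros Hh HK HX.
  set (St := fun p a n w => cpair (u1 w + (if 0 <? hh p a n then 1 else 0))
                 (if (0 <? hh p a n) && (u1 w =? K p a) then hh p a n else u2 w)).
  assert (E : forall p a x, iter_rec (fun _ => cpair 0 0) (St p) a x
                = cpair (cnt (hh p a) x) (fnd (hh p a) (K p a) x)).
  { intros p a x; induction x as [|x IH]; [reflexivity|].
    simpl. rewrite IH. unfold St. rewrite u1_cpair, u2_cpair. reflexivity. }
  eapply comp_ext with (F := fun p z => u2 (iter_rec (fun _ => cpair 0 0) (St p) z (X p z))).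
  { intros p z; cbv beta. rewrite E, u2_cpair. reflexivity. }
  apply comp_u2. apply (comp_iter (fun p _ => cpair 0 0) St (fun p z => z) X); auto.
  - apply comp_const.
  - unfold St.
    assert (Hh2 : comp (fun p x => hh p (u1 x) (u1 (u2 x)))).
    { eapply comp_ext; [|apply (comp_compose _ (fun p x => cpair (u1 x) (u1 (u2 x))) Hh)].
      - intros; cbv beta. rewrite u1_cpair, u2_cpair. reflexivity.
      - apply comp_cpair; [apply comp_u1, comp_id| apply comp_u1, comp_u2, comp_id]. }
    assert (HK2 : comp (fun p x => K p (u1 x))) by (apply comp_compose; auto; apply comp_u1, comp_id).
    apply comp_cpair.
    + apply comp_add. apply comp_u1, comp_u2, comp_u2, comp_id.
      apply comp_if; [apply compb_ltb; [apply comp_const|exact Hh2]| apply comp_const| apply comp_const].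
    + apply comp_if.
      * apply compb_andb. apply compb_ltb; [apply comp_const|exact Hh2].
        apply compb_eqb; [apply comp_u1, comp_u2, comp_u2, comp_id| exact HK2].
      * exact Hh2.
      * apply comp_u2, comp_u2, comp_u2, comp_id.
  - apply comp_id.
Qed.

Lemma comp_allb (f : baire -> nat -> nat -> bool) (X : baire -> nat -> nat) :
  compb (fun p x => f p (u1 x) (u2 x)) -> comp X ->
  compb (fun p z => allb (f p z) (X p z)).
Proof.
  intros Hf HX. unfold compb.
  set (St := fun p a i w => if f p a i then w else 0).
  eapply comp_ext with (F := fun p z => iter_rec (fun _ => 1) (St p) z (X p z)).
  { intros p z; cbv beta. generalize (X p z) as n. induction n as [|n IH]; [reflexivity|].
    simpl. rewrite IH. unfold St. destruct (allb (f p z) n), (f p z n); reflexivity. }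
  apply (comp_iter (fun p _ => 1) St (fun p z => z) X); auto.
  - apply comp_const.
  - unfold St. apply comp_if; [|apply comp_u2, comp_u2, comp_id|apply comp_zero].
    unfold compb in *. eapply comp_ext; [|apply (comp_compose _ (fun p x => cpair (u1 x) (u1 (u2 x))) Hf)].
    + intros; cbv beta. rewrite u1_cpair, u2_cpair. reflexivity.
    + apply comp_cpair; [apply comp_u1, comp_id| apply comp_u1, comp_u2, comp_id].
  - apply comp_id.
Qed.

Ltac crush := repeat (cbv beta; match goal with
 | |- compb _ => first [apply compb_andb | apply compb_orb | apply compb_negb | apply compb_leb
                       | apply compb_ltb | apply compb_eqb | apply comp_allb]
 | |- comp _ => first [apply comp_id | apply comp_const | apply comp_S | apply comp_u1 | apply comp_u2
       | apply comp_orc | apply comp_cpair | apply comp_add | apply comp_sub | apply comp_pred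
       | apply comp_if | apply comp_fnd ]
 end).

Definition kf2 (p : baire) (n : nat) : nat :=
  S (fnd (fun y => p (cpair (u1 n) y)) (u2 n) (u1 n) - 1).

Definition okf (p : baire) (i j m i' : nat) : bool :=
  negb ((m <=? i') && negb (fnd p (cpair i' j) i =? 0)) || (fnd p (cpair i' j) i =? fnd p (cpair m j) i).

Definition kf1 (p : baire) (N : nat) : nat :=
  S (if negb (fnd p (cpair (u2 (u2 N)) (u1 (u2 N))) (u1 N) =? 0)
        && allb (fun i' => okf p (u1 N) (u1 (u2 N)) (u2 (u2 N)) i') (u1 N)
     then fnd p (cpair (u2 (u2 N)) (u1 (u2 N))) (u1 N) - 1 else 0).

Lemma comp_kf2 : comp kf2.
Proof. unfold kf2. crush. Qed.

Lemma comp_kf1 : comp kf1.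
Proof. unfold kf1, okf. crush. Qed.

Lemma cnt_mono p n m : n <= m -> cnt p n <= cnt p m.
Proof. induction 1; simpl; lia. Qed.

Lemma cnt_pos_lt p y y' : y < y' -> 0 < p y -> cnt p y < cnt p y'.
Proof.
  intros H Hp. pose proof (cnt_mono p (S y) y' H). simpl in H0.
  destruct (Nat.ltb_spec 0 (p y)); lia.
Qed.

Lemma cnt_uniq p y y' : 0 < p y -> 0 < p y' -> cnt p y = cnt p y' -> y = y'.
Proof.
  intros H1 H2 E. destruct (Nat.lt_trichotomy y y') as [L|[L|L]]; auto.
  - pose proof (cnt_pos_lt p y y' L H1); lia.
  - pose proof (cnt_pos_lt p y' y L H2); lia.
Qed.

Lemma cnt_ext h h' n : (forall y, y < n -> h y = h' y) -> cnt h n = cnt h' n.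
Proof.
  induction n as [|n IH]; intros H; simpl; auto.
  rewrite IH by (intros; apply H; lia). rewrite H by lia. reflexivity.
Qed.

Lemma cnt_allpos p n : (forall n, 0 < p n) -> cnt p n = n.
Proof.
  intros H. induction n as [|n IH]; simpl; auto. rewrite IH.
  destruct (Nat.ltb_spec 0 (p n)); [lia|]. specialize (H n); lia.
Qed.

Lemma fnd_hit h k x y : y < x -> 0 < h y -> cnt h y = k -> fnd h k x = h y.
Proof.
  induction x as [|x IH]; intros Hy Hp Hc; [lia|]. simpl.
  destruct (Nat.eq_dec y x) as [->|Ne].
  - rewrite (proj2 (Nat.ltb_lt 0 (h x)) Hp), (proj2 (Nat.eqb_eq _ _) Hc). reflexivity.
  - destruct ((0 <? h x) && (cnt h x =? k)) eqn:E.
    + apply Bool.andb_true_iff in E as [E1 E2]. apply Nat.eqb_eq in E2.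
      pose proof (cnt_pos_lt h y x ltac:(lia) Hp). lia.
    + apply IH; auto; lia.
Qed.

Lemma fnd_nz h k x : fnd h k x <> 0 ->
  exists y, y < x /\ 0 < h y /\ cnt h y = k /\ fnd h k x = h y.
Proof.
  induction x as [|x IH]; simpl; intros H; [congruence|].
  destruct ((0 <? h x) && (cnt h x =? k)) eqn:E.
  - apply Bool.andb_true_iff in E as [E1 E2]. apply Nat.eqb_eq in E2. apply Nat.ltb_lt in E1.
    exists x; repeat split; auto.
  - destruct (IH H) as [y [H1 H2]]. exists y; split; [lia|auto].
Qed.

Lemma fnd_stab p k : exists v, (exists N, forall i, N <= i -> fnd p k i = v) /\
  (forall i, fnd p k i <> 0 -> fnd p k i = v).
Proof.
  destruct (classic (exists y, 0 < p y /\ cnt p y = k)) as [[y [Hp Hc]]|Hn].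
  - exists (p y). split.
    + exists (S y). intros i Hi. apply fnd_hit; auto; lia.
    + intros i Hi. destruct (fnd_nz _ _ _ Hi) as [y' [_ [Hp' [Hc' E]]]].
      rewrite E. f_equal. apply (cnt_uniq p); congruence.
  - exists 0. assert (Z : forall i, fnd p k i = 0).
    { intros i. destruct (Nat.eq_dec (fnd p k i) 0); auto.
      destruct (fnd_nz _ _ _ n) as [y [_ [H1 [H2 _]]]]. exfalso; eauto. }
    split; [exists 0; auto| intros i H; rewrite Z in H; congruence].
Qed.

Definition Pp (Finf : nat -> nat) (j m : nat) : Prop :=
  Finf (cpair m j) <> 0 /\
  forall i', m <= i' -> Finf (cpair i' j) <> 0 -> Finf (cpair i' j) = Finf (cpair m j).

Lemma kf1_conv p (Finf : nat -> nat)
  (HF : forall k, (exists N, forall i, N <= i -> fnd p k i = Finf k) /\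
                  (forall i, fnd p k i <> 0 -> fnd p k i = Finf k)) j m :
  exists N, forall i, N <= i -> kf1 p (cpair i (cpair j m)) =
    S (if excluded_middle_informative (Pp Finf j m) then Finf (cpair m j) - 1 else 0).
Proof.
  assert (Hk : forall i, kf1 p (cpair i (cpair j m)) =
     S (if negb (fnd p (cpair m j) i =? 0) && allb (okf p i j m) i
        then fnd p (cpair m j) i - 1 else 0)).
  { intros i; unfold kf1. repeat rewrite ?u1_cpair, ?u2_cpair. reflexivity. }
  destruct (HF (cpair m j)) as [[N0 HN0] Hv].
  destruct (excluded_middle_informative (Pp Finf j m)) as [HP|HP].
  - exists N0. intros i Hi. rewrite Hk, HN0 by auto. destruct HP as [HV HP].
    replace (negb (Finf (cpair m j) =? 0)) with true
      by (symmetry; apply Bool.negb_true_iff, Nat.eqb_neq; auto).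
    assert (allb (okf p i j m) i = true) as ->; [|reflexivity].
    apply allb_spec. intros i' Hi'. unfold okf. rewrite HN0 by auto.
    destruct (Nat.leb_spec m i'); simpl; [|reflexivity].
    destruct (Nat.eqb_spec (fnd p (cpair i' j) i) 0) as [E|E]; simpl; [reflexivity|].
    apply Nat.eqb_eq. rewrite (proj2 (HF (cpair i' j)) i E). apply HP; auto.
    rewrite <- (proj2 (HF _) i E); auto.
  - destruct (Nat.eq_dec (Finf (cpair m j)) 0) as [Z|NZ].
    + exists 0. intros i _. rewrite Hk.
      destruct (Nat.eq_dec (fnd p (cpair m j) i) 0) as [E|E].
      * rewrite E. reflexivity.
      * rewrite (Hv i E) in E. congruence.
    + assert (Ex : exists i', m <= i' /\ Finf (cpair i' j) <> 0 /\ Finf (cpair i' j) <> Finf (cpair m j)).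
      { apply NNPP; intro C; apply HP; split; auto. intros i' H1 H2.
        destruct (Nat.eq_dec (Finf (cpair i' j)) (Finf (cpair m j))); auto.
        exfalso; apply C; eauto. }
      destruct Ex as [i' [H1 [H2 H3]]].
      destruct (HF (cpair i' j)) as [[N1 HN1] _].
      exists (N0 + N1 + S i'). intros i Hi. rewrite Hk, HN0 by lia.
      assert (allb (okf p i j m) i = false) as ->.
      { destruct (allb (okf p i j m) i) eqn:Eb; auto.
        apply (proj1 (allb_spec _ _)) with i' in Eb; [|lia]. unfold okf in Eb.
        rewrite HN1, HN0 in Eb by lia. rewrite (proj2 (Nat.leb_le m i') H1) in Eb.
        replace (Finf (cpair i' j) =? 0) with false in Eb by (symmetry; apply Nat.eqb_neq; auto).
        replace (Finf (cpair i' j) =? Finf (cpair m j)) with false in Eb by (symmetry; apply Nat.eqb_neq; auto).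
        simpl in Eb. discriminate. }
      rewrite Bool.andb_false_r. reflexivity.
Qed.

Lemma choice_nat {A : Type} (P : nat -> A -> Prop) :
  (forall n, exists a, P n a) -> exists f, forall n, P n (f n).
Proof.
  intros H. exists (fun n => proj1_sig (constructive_indefinite_description _ (H n))).
  intros n. exact (proj2_sig (constructive_indefinite_description _ (H n))).
Qed.

Lemma kf1_lim p : exists s, blim (kf1 p) s.
Proof.
  destruct (choice_nat _ (fnd_stab p)) as [Finf HF].
  destruct (choice_nat (fun n v => exists N, forall i, N <= i -> kf1 p (cpair i n) = v)) as [s Hs].
  { intros n. destruct (kf1_conv p Finf HF (u1 n) (u2 n)) as [N HN].
    eexists; exists N; intros i Hi. rewrite <- (cpair_u n) at 1. apply HN; auto. }
  exists s. intros j. apply Hs.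
Qed.

Lemma minus1_allpos p : (forall n, 0 < p n) -> minus1 p (fun n => p n - 1).
Proof. intros H k. exists k. repeat split; auto. apply cnt_allpos; auto. Qed.

Lemma blim_prefix t s : blim t s -> forall y, exists N, forall i, N <= i -> forall x, x <= y -> t (cpair i x) = s x.
Proof.
  intros H y. induction y as [|y [N HN]].
  - destruct (H 0) as [N HN]. exists N. intros i Hi x Hx. replace x with 0 by lia. auto.
  - destruct (H (S y)) as [N' HN']. exists (N + N'). intros i Hi x Hx.
    destruct (Nat.eq_dec x (S y)) as [->|]; [apply HN'; lia| apply HN; lia].
Qed.

Lemma sW_gen (X1 X2 Y : rspace) (R1 : carrier X1 -> carrier Y -> Prop)
  (R2 : carrier X2 -> carrier Y -> Prop) (kf : baire -> baire) :
  comp kf ->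
  (forall p x, rep X1 p x -> (exists y, R1 x y) ->
     exists x', rep X2 (kf p) x' /\ (exists y, R2 x' y) /\ forall y, R2 x' y -> R1 x y) ->
  sW_le (Problem X1 Y R1) (Problem X2 Y R2).
Proof.
  intros [e [me He]] H. exists COracle, e. intros G _ HG p x Hx Hd.
  destruct (H p x Hx Hd) as [x' [Hx' [Hd' Himp]]].
  destruct (HG (kf p) x' Hx' Hd') as [[r Hr] Hall]. split.
  - exists r, (kf p), r. split; [intro n; apply He|split; [exact Hr|intro n; constructor]].
  - intros s [q [r' [Hq [Hr' Hs]]]].
    assert (q = kf p) as ->.
    { apply functional_extensionality; intro n. symmetry. apply (eval_det p e n (kf p n)); [apply He|exact me|apply Hq]. }
    assert (s = r') as ->.
    { apply functional_extensionality; intro n. symmetry.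
      apply (eval_det r' COracle n (r' n)); [constructor|exact I|apply Hs]. }
    destruct (Hall r' Hr') as [y [Hy HR]]. exists y; split; [exact Hy| apply Himp; exact HR].
Qed.

Lemma complS_total X p : exists x, rep (complS X) p x.
Proof.
  destruct (classic (exists q x, minus1 p q /\ rep X q x)) as [[q [x H]]|H].
  - exists (Some x). simpl. eauto.
  - exists None. exact H.
Qed.

Lemma complP_pdom f x : pdom (complP f) x.
Proof.
  destruct x as [a|].
  - destruct (classic (pdom f a)) as [[y Hy]|Hn].
    + exists (Some y). simpl. intros _. eauto.
    + exists None. simpl. intros H; contradiction.
  - exists None. exact I.
Qed.

Lemma md_nonneg (M : cms) x y : (0 <= md M x y)%R.
Proof.
  pose proof (md_tri M x y x). rewrite (proj2 (md_zero M x x) eq_refl) in H.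
  rewrite (md_sym M y x) in H. lra.
Qed.

Lemma ball0 (M : cms) x : ~ ball M 0 x.
Proof.
  unfold ball. cbn. pose proof (md_nonneg M (malpha M 0) x). unfold Rdiv. rewrite Rmult_0_l. lra.
Qed.

Definition sv (q : baire) (n : nat) : nat :=
  if excluded_middle_informative (Pp (fun k => S (q k)) (u1 n) (u2 n))
  then S (q (cpair (u2 n) (u1 n))) - 1 else 0.

Lemma name_dir1 (M : cms) (q r : baire) : blim q r ->
  forall x, (exists n, ball M (sv q n) x) <-> (exists n, ball M (r n) x).
Proof.
  intros Hbl x. split.
  - intros [n Hb]. unfold sv in Hb.
    destruct (excluded_middle_informative _) as [HP|HP]; [|exfalso; eapply ball0; eauto].
    destruct (Hbl (u1 n)) as [N HN]. destruct HP as [_ HP].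
    specialize (HP (u2 n + N) ltac:(lia) ltac:(lia)). rewrite HN in HP by lia.
    exists (u1 n). replace (r (u1 n)) with (S (q (cpair (u2 n) (u1 n))) - 1) by lia. exact Hb.
  - intros [j Hb]. destruct (Hbl j) as [N HN]. exists (cpair j N). unfold sv.
    rewrite u1_cpair, u2_cpair.
    destruct (excluded_middle_informative _) as [HP|HP].
    + replace (S (q (cpair N j)) - 1) with (r j) by (rewrite HN; lia). exact Hb.
    + exfalso. apply HP. split; [lia|]. intros i' Hi' _. rewrite !HN; auto.
Qed.

Lemma dir2 (M : cms) : sW_le (jumpP (complP (CX M))) (complP (jumpP (CX M))).
Proof.
  apply (sW_gen _ _ _ _ _ kf2 comp_kf2). intros t x Hx Hd.
  destruct Hx as [s [Hbl Hs]]. destruct x as [A|].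
  - destruct Hs as [r [Hm Hr]]. exists (Some A). split; [|split].
    + exists (fun n => kf2 t n - 1). split.
      { apply minus1_allpos. intros n; unfold kf2; lia. }
      exists r. split; [|exact Hr].
      intros j. destruct (Hm j) as [y [Hp [Hc Hrj]]].
      destruct (blim_prefix t s Hbl y) as [N HN].
      exists (N + S y). intros i Hi. unfold kf2. rewrite u1_cpair, u2_cpair.
      rewrite (fnd_hit _ _ _ y); [| lia | rewrite HN by lia; auto | ].
      * rewrite HN by lia. lia.
      * rewrite <- Hc. apply cnt_ext. intros z Hz. apply HN; lia.
    + exact (complP_pdom (jumpP (CX M)) (Some A)).
    + intros y H; exact H.
  - destruct (complS_total (jumpS (AminusS M)) (kf2 t)) as [x' Hx'].
    exists x'. split; [exact Hx'|split; [exact (complP_pdom (jumpP (CX M)) x')|intros; exact I]].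
Qed.

Lemma dir1 (M : cms) : sW_le (complP (jumpP (CX M))) (jumpP (complP (CX M))).
Proof.
  apply (sW_gen _ _ _ _ _ kf1 comp_kf1). intros p x Hx Hd.
  destruct x as [A|].
  - destruct Hx as [q [Hm [r [Hbl Hr]]]]. exists (Some A). split; [|split].
    + set (Finf := fun k => S (q k)).
      assert (HF : forall k, (exists N, forall i, N <= i -> fnd p k i = Finf k) /\
                  (forall i, fnd p k i <> 0 -> fnd p k i = Finf k)).
      { intros k. destruct (Hm k) as [y [Hp [Hc Hq]]]. unfold Finf. rewrite Hq. split.
        - exists (S y). intros i Hi. rewrite (fnd_hit _ _ _ y); auto; lia.
        - intros i Hi. destruct (fnd_nz _ _ _ Hi) as [y' [_ [Hp' [Hc' E]]]].
          rewrite E. rewrite (cnt_uniq p y' y); auto; [lia|congruence]. }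
      exists (fun n => S (sv q n)). split.
      * intros n. destruct (kf1_conv p Finf HF (u1 n) (u2 n)) as [N HN].
        exists N. intros i Hi. rewrite <- (cpair_u n) at 1. rewrite HN by auto. reflexivity.
      * exists (fun n => S (sv q n) - 1). split.
        { apply (minus1_allpos (fun n => S (sv q n))). intros; lia. }
        intros y. rewrite (Hr y).
        assert (E : (exists n, ball M (S (sv q n) - 1) y) <-> (exists n, ball M (sv q n) y)).
        { split; intros [n H]; exists n; [replace (sv q n) with (S (sv q n) - 1) by lia|
             replace (S (sv q n) - 1) with (sv q n) by lia]; exact H. }
        simpl. rewrite E, (name_dir1 M q r Hbl). tauto.
    + exact (complP_pdom (CX M) (Some A)).
    + intros y H; exact H.
  - destruct (kf1_lim p) as [s Hs].
    destruct (complS_total (AminusS M) s) as [x' Hx'].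
    exists x'. split; [exists s; split; auto|split; [exact (complP_pdom (CX M) x')|intros; exact I]].
Qed.

Theorem proposition5p4 (M : cms) :
  sW_equiv (complP (jumpP (CX M))) (jumpP (complP (CX M))).
Proof.
  split; [apply dir1|apply dir2].
Qed.
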